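(* Let $\mathcal{O}=(O_1,\ldots,O_n)$ be a chain with $n\ge 2$, and let $\mathcal{O}_{1,n-1}=(O_1,\ldots,O_{n-1})$. Then $\Phi_{\mathcal{O}}\le\Phi_{\mathcal{O}_{1,n-1}}$, where for a chain $\mathcal{Q}=(O_1,\ldots,O_m)$, $\Phi_{\mathcal{Q}}=\varphi(r_m-r_1)-\frac{\varphi}{3}\sum_{i=2}^m(2H_i+V_i)$ with $\varphi=\frac{3}{\sqrt5}(1-1.8/1.998)$.
   Context: All objects lie in the Euclidean plane; a ''circle'' means a closed disk. Chain. A sequence of distinct finite closed disks $(O_1,\ldots,O_n)$ is a chain if: (1) every two consecutive disks $O_i,O_{i+1}$ intersect; let $a_i,b_i$ be the common points of their boundary circles ($a_i=b_i$ if tangent), labelled so that all the $a_i$ lie on one side of the chain and all the $b_i$ on the other. Let $C_i^{(i+1)}$ be the arc of the boundary of $O_i$ lying in $O_{i+1}$ and $C_{i+1}^{(i)}$ the arc of the boundary of $O_{i+1}$ lying in $O_i$. (2) For $2\le i\le n-1$, the arcs $C_i^{(i-1)}$ and $C_i^{(i+1)}$ share no point other than a boundary point. $r_i$ is the radius and $o_i$ the center of $O_i$. For $2\le i\le n$, choose coordinates in which $o_{i-1},o_i$ lie on a horizontal line and $a_{i-1}$ is on or above that line. Let $q_{i-1}^{\rightarrow}$ (resp. $q_i^{\leftarrow}$) be the point of the upper boundary of $O_{i-1}$ (resp. $O_i$) farthest from the line $o_{i-1}o_i$. Let $Q_{i-1}^{\rightarrow}$ be the upper arc of the boundary of $O_{i-1}$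 between $q_{i-1}^{\rightarrow}$ and $a_{i-1}$, and $Q_i^{\leftarrow}$ the upper arc of the boundary of $O_i$ between $q_i^{\leftarrow}$ and $a_{i-1}$. $Q_{i-1}^{\rightarrow}$ is colored red if it lies inside $O_i$ and green otherwise; $Q_i^{\leftarrow}$ is red if it lies inside $O_{i-1}$ and green otherwise. Let $\mathcal{P}_i$ be the path from $q_{i-1}^{\rightarrow}$ to $q_i^{\leftarrow}$ formed by $Q_{i-1}^{\rightarrow}$ and $Q_i^{\leftarrow}$. $H_i$ (resp. $V_i$) is the horizontal (resp. vertical) distance traveled along $\mathcal{P}_i$, green arcs contributing positively and red arcs negatively. *)

(* Defs.v *)
From Stdlib Require Import Reals Lra List ClassicalEpsilon.
Open Scope R_scope.

Definition pt := (R * R)%type.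
Definition psub (p q : pt) : pt := (fst p - fst q, snd p - snd q).
Definition dot (p q : pt) : R := fst p * fst q + snd p * snd q.
(* cross (v, w) > 0 iff w is to the left of the direction v *)
Definition cross (v w : pt) : R := fst v * snd w - snd v * fst w.
Definition pscale (k : R) (p : pt) : pt := (k * fst p, k * snd p).
Definition dist2 (p q : pt) : R := dot (psub p q) (psub p q).

Definition in_disk (c : pt) (r : R) (p : pt) : Prop := dist2 p c <= r ^ 2.
Definition on_circle (c : pt) (r : R) (p : pt) : Prop := dist2 p c = r ^ 2.

(* A chain (O_1, ..., O_n): O_i has center o i and radius r i (indices 1..n);
   a i, b i (1 <= i < n) are the common points of the boundary circles of
   O_i and O_{i+1}. *)
Definition is_chain (n : nat) (o : nat -> pt) (r : nat -> R)
    (a b : nat -> pt) : Prop :=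
  (forall i, (1 <= i <= n)%nat -> 0 < r i) /\
  (forall i j, (1 <= i <= n)%nat -> (1 <= j <= n)%nat -> i <> j ->
      (o i, r i) <> (o j, r j)) /\
  (forall i, (1 <= i < n)%nat ->
      (exists p, in_disk (o i) (r i) p /\ in_disk (o (S i)) (r (S i)) p) /\
      (forall p, (on_circle (o i) (r i) p /\ on_circle (o (S i)) (r (S i)) p)
                 <-> (p = a i \/ p = b i))) /\
  (* all a_i lie on one side of the chain (all b_i on the other) *)
  ((forall i, (1 <= i < n)%nat ->
      0 <= cross (psub (o (S i)) (o i)) (psub (a i) (o i))) \/
   (forall i, (1 <= i < n)%nat ->
      cross (psub (o (S i)) (o i)) (psub (a i) (o i)) <= 0)) /\
  (* (2) for 2 <= i <= n-1, C_i^(i-1) and C_i^(i+1) share only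
     boundary (end) points *)
  (forall i, (2 <= i)%nat -> (i <= n - 1)%nat -> forall p,
      on_circle (o i) (r i) p ->
      in_disk (o (pred i)) (r (pred i)) p ->
      in_disk (o (S i)) (r (S i)) p ->
      on_circle (o (pred i)) (r (pred i)) p \/ on_circle (o (S i)) (r (S i)) p).

(* Coordinates for step i (2 <= i): "horizontal" unit vector along
   o_{i-1} -> o_i, and "vertical" unit normal pointing to the side of a_{i-1}. *)
Definition hdir (o : nat -> pt) (i : nat) : pt :=
  pscale (/ sqrt (dist2 (o i) (o (pred i)))) (psub (o i) (o (pred i))).
Definition vdir (o : nat -> pt) (a : nat -> pt) (i : nat) : pt :=
  let u := hdir o i in
  let w := (- snd u, fst u) in
  if Rle_dec 0 (dot (psub (a (pred i)) (o (pred i))) w) then w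
  else pscale (-1) w.

(* Upper arc of the circle (c, rad) between its topmost point (horizontal
   coordinate 0 relative to c) and the point x. *)
Definition upper_arc (u v c : pt) (rad : R) (x : pt) (p : pt) : Prop :=
  on_circle c rad p /\ 0 <= dot (psub p c) v /\
  Rmin 0 (dot (psub x c) u) <= dot (psub p c) u <= Rmax 0 (dot (psub x c) u).

(* sign of an arc: -1 (red) if it lies inside the disk (c', r'), +1 (green) otherwise *)
Definition arc_sign (S : pt -> Prop) (c' : pt) (r' : R) : R :=
  if excluded_middle_informative (forall p, S p -> in_disk c' r' p)
  then -1 else 1.

Definition Qright (o : nat -> pt) (r : nat -> R) (a : nat -> pt) (i : nat) :=
  upper_arc (hdir o i) (vdir o a i) (o (pred i)) (r (pred i)) (a (pred i)).
Definition Qleft (o : nat -> pt) (r : nat -> R) (a : nat -> pt) (i : nat) :=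
  upper_arc (hdir o i) (vdir o a i) (o i) (r i) (a (pred i)).

Definition sR o r a i := arc_sign (Qright o r a i) (o i) (r i).
Definition sL o r a i := arc_sign (Qleft o r a i) (o (pred i)) (r (pred i)).

(* H_i and V_i: signed horizontal / vertical distances travelled along P_i *)
Definition Hh (o : nat -> pt) (r : nat -> R) (a : nat -> pt) (i : nat) : R :=
  sR o r a i * Rabs (dot (psub (a (pred i)) (o (pred i))) (hdir o i)) +
  sL o r a i * Rabs (dot (psub (a (pred i)) (o i)) (hdir o i)).
Definition Vv (o : nat -> pt) (r : nat -> R) (a : nat -> pt) (i : nat) : R :=
  sR o r a i * (r (pred i) - dot (psub (a (pred i)) (o (pred i))) (vdir o a i)) +
  sL o r a i * (r i - dot (psub (a (pred i)) (o i)) (vdir o a i)).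

Definition varphi : R := 3 / sqrt 5 * (1 - (18/10) / (1998/1000)).

Definition sum_2_to (f : nat -> R) (m : nat) : R :=
  fold_right Rplus 0 (map f (seq 2 (m - 1))).

Definition Phi (o : nat -> pt) (r : nat -> R) (a : nat -> pt) (m : nat) : R :=
  varphi * (r m - r 1%nat) -
  varphi / 3 * sum_2_to (fun i => 2 * Hh o r a i + Vv o r a i) m.

(* Main.v *)
Require Import Defs.
From Stdlib Require Import Reals.
From Stdlib Require Import Lra Psatz ClassicalEpsilon List Lia.
Open Scope R_scope.

Lemma core (x y d R1 R2 sR sL : R) : 0 < d -> 0 < R1 -> 0 < R2 -> 0 <= y ->
  x^2 + y^2 = R1^2 -> (x-d)^2 + y^2 = R2^2 ->
  (sR = -1 \/ sR = 1) -> (sL = -1 \/ sL = 1) ->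
  (sR = -1 -> R1^2 + d^2 <= R2^2) -> (sL = -1 -> d^2 + R2^2 <= R1^2) ->
  3*(R2 - R1) <= 2*(sR * Rabs x + sL * Rabs (x - d)) + (sR*(R1 - y) + sL*(R2 - y)).
Proof.
  intros Hd H1 H2 Hy E1 E2 [HR|HR] [HL|HL] TR TL.
  - specialize (TR HR); specialize (TL HL); nra.
  - specialize (TR HR). subst.
    assert (x <= 0) by nra.
    assert (-x <= R1) by nra.
    assert (R2 <= R1 + d) by nra.
    rewrite (Rabs_left1 x) by lra. rewrite (Rabs_left1 (x-d)) by lra. lra.
  - specialize (TL HL). subst.
    assert (d <= x) by nra.
    assert (R2 <= R1) by nra.
    rewrite (Rabs_right x) by lra. rewrite (Rabs_right (x-d)) by lra. lra.
  - subst.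
    assert (y <= R1) by nra.
    assert (R2 <= Rabs (x-d) + y).
    { assert (0 <= Rabs (x-d)) by apply Rabs_pos.
      assert (Rabs (x-d) ^2 = (x-d)^2) by apply pow2_abs.
      nra. }
    assert (0 <= Rabs x) by apply Rabs_pos. lra.
Qed.
Lemma arc_sign_spec (S : pt -> Prop) c rr :
  (arc_sign S c rr = 1) \/ (arc_sign S c rr = -1 /\ forall p, S p -> in_disk c rr p).
Proof. unfold arc_sign. destruct excluded_middle_informative; auto. Qed.

Lemma geom (o : nat -> pt) (r : nat -> R) (a : nat -> pt) (i : nat) :
  0 < r (pred i) -> 0 < r i -> o (pred i) <> o i ->
  on_circle (o (pred i)) (r (pred i)) (a (pred i)) ->
  on_circle (o i) (r i) (a (pred i)) ->
  3*(r i - r (pred i)) <= 2 * Hh o r a i + Vv o r a i.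
Proof.
  intros H1 H2 Hne C1 C2.
  unfold Hh, Vv, sR, sL, Qright, Qleft, upper_arc.
  unfold vdir, hdir in *.
  destruct (o (pred i)) as [a1 a2] eqn:Ec1.
  destruct (o i) as [b1 b2] eqn:Ec2.
  destruct (a (pred i)) as [q1 q2] eqn:EA.
  set (R1 := r (pred i)) in *. set (R2 := r i) in *.
  unfold on_circle, in_disk, dist2, dot, psub, pscale in *; simpl in *.
  set (D := (b1 - a1) * (b1 - a1) + (b2 - a2) * (b2 - a2)).
  assert (HD : 0 < D).
  { unfold D. destruct (Req_dec b1 a1); destruct (Req_dec b2 a2).
    - subst; exfalso; apply Hne; reflexivity.
    - assert (b2 - a2 <> 0) by lra. nra.
    - assert (b1 - a1 <> 0) by lra. nra.
    - assert (b1 - a1 <> 0) by lra. nra. }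
  set (d := sqrt D).
  assert (Hd : 0 < d) by (apply sqrt_lt_R0; exact HD).
  assert (Hdd : d * d = D) by (apply sqrt_sqrt; lra).
  set (u1 := / d * (b1 - a1)). set (u2 := / d * (b2 - a2)).
  assert (E1 : b1 - a1 = d * u1) by (unfold u1; field; lra).
  assert (E2 : b2 - a2 = d * u2) by (unfold u2; field; lra).
  assert (Hu : u1 * u1 + u2 * u2 = 1).
  { apply (Rmult_eq_reg_l (d*d)); [|nra].
    replace (d * d * (u1 * u1 + u2 * u2)) with ((d*u1)*(d*u1) + (d*u2)*(d*u2)) by ring.
    rewrite <- E1, <- E2. fold D. lra. }
  clearbody u1 u2 d.
  assert (Hb1 : b1 = a1 + d * u1) by lra.
  assert (Hb2 : b2 = a2 + d * u2) by lra.
  clear E1 E2 Hdd. subst D. subst b1 b2.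
  set (x := (q1 - a1) * u1 + (q2 - a2) * u2).
  destruct (Rle_dec 0 ((q1 - a1) * - u2 + (q2 - a2) * u1)) as [Hs|Hs]; simpl.
  - set (y := (q1 - a1) * - u2 + (q2 - a2) * u1) in *.
    replace ((q1 - (a1 + d * u1)) * u1 + (q2 - (a2 + d * u2)) * u2) with (x - d)
      by (transitivity (x - d*(u1*u1+u2*u2)); [rewrite Hu; ring | unfold x; ring]).
    replace ((q1 - (a1 + d * u1)) * - u2 + (q2 - (a2 + d * u2)) * u1) with y
      by (unfold y; ring).
    assert (Ex : x ^ 2 + y ^ 2 = R1 ^ 2).
    { transitivity (((q1 - a1) * (q1 - a1) + (q2 - a2) * (q2 - a2)) * (u1*u1+u2*u2)).
      unfold x, y; ring. rewrite Hu, C1; ring. }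
    assert (Ey : (x - d) ^ 2 + y ^ 2 = R2 ^ 2).
    { transitivity ((q1-a1)*(q1-a1)+(q2-a2)*(q2-a2) - 2*d*x + d^2*(u1*u1+u2*u2)).
      - rewrite Hu, C1. replace ((x-d)^2+y^2) with ((x^2+y^2) -2*d*x + d^2) by ring.
        rewrite Ex. ring.
      - replace (R2^2) with (R2*(R2*1)) by ring. rewrite <- C2. unfold x; ring. }
    assert (KR1 : R1*R1*(u1*u1+u2*u2) = R1*R1) by (rewrite Hu; ring).
    assert (KR2 : R2*R2*(u1*u1+u2*u2) = R2*R2) by (rewrite Hu; ring).
    assert (Kd : d*d*(u1*u1+u2*u2) = d*d) by (rewrite Hu; ring).
    assert (KR : R1*(u1*u1+u2*u2) = R1) by (rewrite Hu; ring).
    assert (KR' : R2*(u1*u1+u2*u2) = R2) by (rewrite Hu; ring).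
    match goal with |- context [arc_sign ?S (a1 + d * u1, a2 + d * u2) R2] =>
      destruct (arc_sign_spec S (a1 + d * u1, a2 + d * u2) R2) as [HR|[HR TR]];
      rewrite HR end;
    match goal with |- context [arc_sign ?S (a1, a2) R1] =>
      destruct (arc_sign_spec S (a1, a2) R1) as [HL|[HL TL]];
      rewrite HL end.
    all: apply (core x y d R1 R2); auto; try lra.
    all: intros _.
    all: pose proof (Rmin_l 0 x); pose proof (Rmax_l 0 x);
         pose proof (Rmin_l 0 (x-d)); pose proof (Rmax_l 0 (x-d)).
    all: first [
        (specialize (TR (a1 + R1 * - u2, a2 + R1 * u1));
        unfold in_disk, dist2, dot, psub in TR; simpl in TR;
        lapply TR; [intro TQ'; lra | split; [lra | split; lra]])
      | (specialize (TL (a1 + d * u1 + R2 * - u2, a2 + d * u2 + R2 * u1));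
        unfold in_disk, dist2, dot, psub in TL; simpl in TL;
        lapply TL; [intro TQ'; lra | split; [lra | split; lra]]) ].
  - set (y := (q1 - a1) * (-1 * - u2) + (q2 - a2) * (-1 * u1)) in *.
    assert (Hs' : 0 <= y) by (unfold y; lra). clear Hs. rename Hs' into Hs.
    replace ((q1 - (a1 + d * u1)) * u1 + (q2 - (a2 + d * u2)) * u2) with (x - d)
      by (transitivity (x - d*(u1*u1+u2*u2)); [rewrite Hu; ring | unfold x; ring]).
    replace ((q1 - (a1 + d * u1)) * (-1 * - u2) + (q2 - (a2 + d * u2)) * (-1 * u1)) with y
      by (unfold y; ring).
    assert (Ex : x ^ 2 + y ^ 2 = R1 ^ 2).
    { transitivity (((q1 - a1) * (q1 - a1) + (q2 - a2) * (q2 - a2)) * (u1*u1+u2*u2)).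
      unfold x, y; ring. rewrite Hu, C1; ring. }
    assert (Ey : (x - d) ^ 2 + y ^ 2 = R2 ^ 2).
    { transitivity ((q1-a1)*(q1-a1)+(q2-a2)*(q2-a2) - 2*d*x + d^2*(u1*u1+u2*u2)).
      - rewrite Hu, C1. replace ((x-d)^2+y^2) with ((x^2+y^2) -2*d*x + d^2) by ring.
        rewrite Ex. ring.
      - replace (R2^2) with (R2*(R2*1)) by ring. rewrite <- C2. unfold x; ring. }
    assert (KR1 : R1*R1*(u1*u1+u2*u2) = R1*R1) by (rewrite Hu; ring).
    assert (KR2 : R2*R2*(u1*u1+u2*u2) = R2*R2) by (rewrite Hu; ring).
    assert (Kd : d*d*(u1*u1+u2*u2) = d*d) by (rewrite Hu; ring).
    assert (KR : R1*(u1*u1+u2*u2) = R1) by (rewrite Hu; ring).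
    assert (KR' : R2*(u1*u1+u2*u2) = R2) by (rewrite Hu; ring).
    match goal with |- context [arc_sign ?S (a1 + d * u1, a2 + d * u2) R2] =>
      destruct (arc_sign_spec S (a1 + d * u1, a2 + d * u2) R2) as [HR|[HR TR]];
      rewrite HR end;
    match goal with |- context [arc_sign ?S (a1, a2) R1] =>
      destruct (arc_sign_spec S (a1, a2) R1) as [HL|[HL TL]];
      rewrite HL end.
    all: apply (core x y d R1 R2); auto; try lra.
    all: intros _.
    all: pose proof (Rmin_l 0 x); pose proof (Rmax_l 0 x);
         pose proof (Rmin_l 0 (x-d)); pose proof (Rmax_l 0 (x-d)).
    all: first [
        (specialize (TR (a1 + R1 * (-1 * - u2), a2 + R1 * (-1 * u1)));
        unfold in_disk, dist2, dot, psub in TR; simpl in TR;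
        lapply TR; [intro TQ'; lra | split; [lra | split; lra]])
      | (specialize (TL (a1 + d * u1 + R2 * (-1 * - u2), a2 + d * u2 + R2 * (-1 * u1)));
        unfold in_disk, dist2, dot, psub in TL; simpl in TL;
        lapply TL; [intro TQ'; lra | split; [lra | split; lra]]) ].
Qed.
Lemma fold_plus_acc (l : list R) (z : R) :
  fold_right Rplus z l = fold_right Rplus 0 l + z.
Proof. induction l; simpl; [lra | rewrite IHl; lra]. Qed.

Lemma sum_step (f : nat -> R) (m : nat) : (1 <= m)%nat ->
  sum_2_to f (S m) = sum_2_to f m + f (S m).
Proof.
  intro Hm. unfold sum_2_to.
  replace (S m - 1)%nat with (S (m - 1)) by lia.
  rewrite seq_S, map_app, fold_right_app. simpl.
  rewrite fold_plus_acc. replace (S (S (m - 1))) with (S m) by lia. lra.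
Qed.

Lemma varphi_pos : 0 < varphi.
Proof.
  unfold varphi. apply Rmult_lt_0_compat.
  - apply Rdiv_lt_0_compat; [lra | apply sqrt_lt_R0; lra].
  - apply Rlt_0_minus. apply (Rmult_lt_reg_r (1998/1000)); [lra|].
    unfold Rdiv. rewrite Rmult_assoc, Rinv_l by lra. lra.
Qed.

Theorem proposition1 (n : nat) (o : nat -> pt) (r : nat -> R) (a b : nat -> pt) :
  (2 <= n)%nat -> is_chain n o r a b ->
  Phi o r a n <= Phi o r a (n - 1).
Proof.
  intros Hn [Hr [Hdist [Hint _]]].
  destruct n as [|m]; [lia|].
  replace (S m - 1)%nat with m by lia.
  assert (Hm : (1 <= m)%nat) by lia.
  assert (R1p : 0 < r m) by (apply Hr; lia).
  assert (R2p : 0 < r (S m)) by (apply Hr; lia).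
  destruct (Hint m ltac:(lia)) as [_ Hiff].
  destruct (proj2 (Hiff (a m)) (or_introl eq_refl)) as [C1 C2].
  assert (Hne : o m <> o (S m)).
  { intro E. apply (Hdist m (S m)); try lia.
    rewrite E in C1. unfold on_circle in C1, C2. rewrite C1 in C2.
    assert (r m = r (S m)) by nra. rewrite E, H. reflexivity. }
  pose proof (geom o r a (S m) R1p R2p Hne C1 C2) as G. simpl in G.
  unfold Phi. rewrite (sum_step _ m Hm).
  pose proof varphi_pos.
  assert (K : varphi * (r (S m) - r m) <= varphi / 3 * (2 * Hh o r a (S m) + Vv o r a (S m))).
  { unfold Rdiv. replace (varphi * / 3 * (2 * Hh o r a (S m) + Vv o r a (S m)))
      with (varphi * (/3 * (2 * Hh o r a (S m) + Vv o r a (S m)))) by ring.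
    apply Rmult_le_compat_l; lra. }
  lra.
Qed.
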